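(* Let $f(x):=x^n+a_1x^{n-1}+a_2x^{n-2}+\cdots+a_n$ be a real polynomial, and set $a_0:=1$. Suppose $f$ has (counting multiplicities) $n_+$ roots with positive real part, $n_-$ roots with negative real part and $n_0<n$ purely imaginary roots (roots with zero real part), so $n_++n_-+n_0=n$. Let \[ P(x):=\sum_{j\ge 0,\ 2j\le n}(-1)^j a_{2j}\,x^{n-2j}=x^n-a_2x^{n-2}+a_4x^{n-4}-\cdots, \] \[ Q(x):=\sum_{j\ge 0,\ 2j+1\le n}(-1)^j a_{2j+1}\,x^{n-2j-1}=a_1x^{n-1}-a_3x^{n-3}+a_5x^{n-5}-\cdots, \] and $d:=n-2\min(n_+,n_-)$. Then, counting multiplicities, there exist at least $d$ real roots $\mu_1,\ldots,\mu_d$ of $P$ and at least $d-1$ real roots $\nu_1,\ldots,\nu_{d-1}$ of $Q$ such that \[ \mu_1\le\nu_1\le\mu_2\le\nu_2\le\cdots\le\nu_{d-1}\le\mu_d . \] If $n_0=0$, then these inequalities may be taken to be strict.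
   Context: ''Counting multiplicities'' means that a root of multiplicity $m$ may appear up to $m$ times in the respective list. *)

(* Defs.v *)
From mathcomp Require Import all_boot all_order all_algebra.
From mathcomp Require Import complex.
Set Implicit Arguments. Unset Strict Implicit. Unset Printing Implicit Defensive.
Import Order.TTheory GRing.Theory Num.Theory.
Local Open Scope ring_scope.

(* The polynomial f = sum_{i=0}^n a_i x^(n-i)  (with a_0 = 1 imposed as a hypothesis). *)
Definition fpoly (R : nzRingType) (n : nat) (a : nat -> R) : {poly R} :=
  \sum_(i < n.+1) a i *: 'X^(n - i).

Definition Ppoly (R : nzRingType) (n : nat) (a : nat -> R) : {poly R} :=
  \sum_(j < (n./2).+1) ((-1) ^+ j * a j.*2) *: 'X^(n - j.*2).

Definition Qpoly (R : nzRingType) (n : nat) (a : nat -> R) : {poly R} :=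
  \sum_(j < n.+1./2) ((-1) ^+ j * a j.*2.+1) *: 'X^(n - j.*2.+1).

Definition interlace_le (R : realDomainType) (mu nu : seq R) :=
  forall i, (i < size nu)%N -> mu`_i <= nu`_i /\ nu`_i <= mu`_i.+1.
Definition interlace_lt (R : realDomainType) (mu nu : seq R) :=
  forall i, (i < size nu)%N -> mu`_i < nu`_i /\ nu`_i < mu`_i.+1.

(* Main.v *)
Require Import Defs.
From mathcomp Require Import all_boot all_order all_algebra.
From mathcomp Require Import complex.
From mathcomp Require Import polyorder polyrcf qe_rcf_th.
From mathcomp Require Import ring lra zify.
Import Order.TTheory GRing.Theory Num.Theory.
Local Open Scope ring_scope.

(* Proof sketch: h(y) := i^-n f(iy) = P(y) - i Q(y) = prod (y + i z).
   The Cauchy index of Q/P equals #(roots of h in upper half plane) -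
   #(lower half plane) (Routh-Hurwitz, proved by induction on the roots
   using the Cauchy inversion formula of qe_rcf_th).  On every interval
   free of roots of Q the index is at most 1, which gives strictly
   interlacing roots.  Roots on the imaginary axis are common real
   factors of P and Q and are merged in (weak interlacing). *)
Section Index.
Variable R : rcfType.
Implicit Types p q : {poly R}.

Lemma sgzVx (x : R) : sgz x^-1 = sgz x.
Proof. by rewrite -sgz_sgr sgrV sgz_sgr. Qed.

Lemma jump_modp q p x : jump q p x = jump (q %% p) p x.
Proof.
have [->|p0] := eqVneq p 0; first by rewrite !jumppc.
by rewrite jump_mod modpE jump_mulCp -exprVn sgzX sgzVx.
Qed.

Lemma cindexR_modp q p : cindexR q p = cindexR (q %% p) p.
Proof. by apply: eq_bigr => x _; rewrite jump_modp. Qed.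

Lemma cindexR_addmul q p k : cindexR (q + k * p) p = cindexR q p.
Proof. by rewrite cindexR_modp modpD modp_mull addr0 -cindexR_modp. Qed.

Lemma cindexR_scale c q p : cindexR (c *: q) p = sgz c * cindexR q p.
Proof. by rewrite /cindexR big_distrr; apply: eq_bigr => x _; rewrite jump_mulCp. Qed.

Lemma cindexR_opp q p : cindexR (- q) p = - cindexR q p.
Proof. by rewrite -scaleN1r cindexR_scale sgzN sgz1 mulN1r. Qed.

Lemma cindexR_pos g q p : (forall x, 0 < g.[x]) -> cindexR (g * q) p = cindexR q p.
Proof.
move=> gpos; apply: eq_bigr => x _.
have g0 : g != 0 by apply/eqP => g0; move: (gpos 0); rewrite g0 horner0 ltxx.
have [->|q0] := eqVneq q 0; first by rewrite mulr0 !jump0p.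
rewrite /jump mulf_eq0 (negPf g0) (negPf q0) /=.
have [->|p0] := eqVneq p 0; first by rewrite !mu0 !sub0n.
rewrite mu_mul ?mulf_neq0 // (@muNroot _ g x) ?add0n; last by rewrite rootE gt_eqF ?gpos.
by rewrite -mulrA sgp_right_mul sgp_rightNroot ?rootE ?gt_eqF ?gpos // gtr0_sg ?gpos // mul1r.
Qed.

Lemma cindexR_inv p q : cindexR q p + cindexR p q = crossR (p * q).
Proof.
rewrite cindexR_rec /next_mod cindexR_scale.
rewrite -addrA -[RHS]addr0; congr (_ + _).
rewrite /cindexR big_distrr -big_split /= big1 // => x _.
by rewrite [jump p q x]jump_mod sgzN sgzX mulNr addNr.
Qed.

End Index.
Section Step.
Variable R : rcfType.
Implicit Types p q : {poly R}.

Lemma crossR_monic_even p : p \is monic -> ~~ odd (size p) -> crossR p = 1.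
Proof.
move=> pm ev; rewrite /crossR /sgp_minfty /sgp_pinfty (eqP pm) mulr1 sgr1.
have sp : size p = (size p).-1.+1.
  by rewrite prednK // lt0n size_poly_eq0 monic_neq0.
move: ev; rewrite sp /= negbK => od.
by rewrite -signr_odd od expr1 sgrN1 /variation sgz1 mul1r mulN1r oppr_lt0 ltr01.
Qed.

Lemma cindexR_step (P Q : {poly R}) (al be : R) : be != 0 -> P \is monic -> (size Q < size P)%N ->
  let s := 'X - al%:P in
  let D := s * P - be *: Q in
  let N := s * Q + be *: P in
  [/\ cindexR N D = cindexR Q P + sgz be, D \is monic, size D = (size P).+1
    & (size N < size D)%N].
Proof.
move=> be0 Pm sQP s D N.
have P0 : P != 0 by apply: monic_neq0.
have ssP : size (s * P) = (size P).+1 by rewrite size_monicM ?monicXsubC // size_XsubC.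
have sbQ : (size (- (be *: Q)) < size (s * P)%R)%N.
  by rewrite size_opp ssP ltnS ltnW // (leq_ltn_trans (size_scale_leq _ _)).
have Dm : D \is monic by rewrite monicE lead_coefDl // -monicE monicMl ?monicXsubC.
have sD : size D = (size P).+1 by rewrite /D size_polyDl.
have sN : (size N < size D)%N.
  rewrite sD ltnS (leq_trans (size_polyD _ _)) // geq_max size_scale_leq andbT.
  have [->|Q0] := eqVneq Q 0; first by rewrite mulr0 size_poly0.
  by rewrite size_monicM ?monicXsubC // size_XsubC.
split=> //.
pose g := s ^+ 2 + (be ^+ 2)%:P.
have gpos x : 0 < g.[x].
  rewrite /g !hornerE /=; apply: ltr_wpDl; first exact: sqr_ge0.
  by rewrite exprn_even_gt0.
have eN : be *: N = g * P + (- s) * D.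
  rewrite /N /D /g -!mul_polyC rmorphXn /=; ring.
have h1 : sgz be * cindexR N D = cindexR P D.
  by rewrite -cindexR_scale eN cindexR_addmul cindexR_pos.
have h2 : cindexR D P = - (sgz be * cindexR Q P).
  by rewrite /D addrC cindexR_addmul cindexR_opp cindexR_scale.
have h3 : cindexR P D + cindexR D P = 1.
  rewrite cindexR_inv crossR_monic_even ?monicMl //.
  by rewrite size_monicM ?monic_neq0 // sD addSn /= oddD addbb.
have sb2 : sgz be * sgz be = 1.
  by case: sgzP be0.
apply: (@mulfI _ (sgz be)); first by rewrite sgz_eq0.
rewrite h1 mulrDr sb2.
by move: h3; rewrite h2 => /eqP; rewrite subr_eq => /eqP ->; rewrite addrC.
Qed.
End Step.
Section Prod.
Variable R : rcfType.
Local Notation toC := (map_poly (real_complex R)).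
Local Notation Ii := (Complex (0:R) 1).

Lemma Ii2 : Ii%:P * Ii%:P = -1 :> {poly R[i]}.
Proof. rewrite -polyCM -polyCN; congr (_%:P); apply/eqP; rewrite eq_complex /=.
by rewrite !mul0r !mulr0 !mul1r sub0r add0r oppr0 !eqxx. Qed.

Lemma index_prod (ws : seq R[i]) : all (fun w => complex.Im w != 0) ws ->
  exists P Q : {poly R},
   [/\ toC P - Ii%:P * toC Q = \prod_(w <- ws) ('X - w%:P), P \is monic,
       (size Q < size P)%N
     & cindexR Q P = (count (fun w => 0 < complex.Im w) ws)%:Z
                     - (count (fun w => complex.Im w < 0) ws)%:Z].
Proof.
elim: ws => [_|w ws IH /= /andP[w0 /IH [P [Q [eh Pm sQ hi]]]]].
  exists 1, 0; rewrite big_nil rmorph1 rmorph0 mulr0 subr0 monic1 size_poly0 size_poly1.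
  by split=> //; rewrite cindexR0p.
have [hi' Dm sD sN] := (@cindexR_step _ P Q (complex.Re w) (complex.Im w) w0 Pm sQ).
set s := 'X - _ in hi' Dm sD sN; set D := _ - _ in hi' Dm sD sN.
set N := _ + _ in hi' Dm sD sN.
exists D, N; split=> //.
- rewrite big_cons -eh /D /N /s.
  rewrite !(rmorphB, rmorphD, rmorphM) /= !map_polyZ /= map_polyX map_polyC /=.
  have ew : w%:P = (real_complex R (complex.Re w))%:P + Ii%:P * (real_complex R (complex.Im w))%:P.
    by rewrite -polyCM -polyCD; congr (_%:P); apply/eqP; rewrite eq_complex /= !mul0r !mul1r !subr0 !add0r addr0 !eqxx.
  rewrite ew -!mul_polyC.
  apply/eqP; rewrite -subr_eq0.
  set I := Ii%:P; set tP := toC P; set tQ := toC Q.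
  set a := ((complex.Re w)%:C%C)%:P; set b := ((complex.Im w)%:C%C)%:P.
  have -> : ('X - a) * tP - b * tQ - I * (('X - a) * tQ + b * tP) -
    ('X - (a + I * b)) * (tP - I * tQ) = - (I * I + 1) * b * tQ.
    ring.
  by rewrite Ii2 addNr oppr0 !mul0r.
- rewrite hi' hi /=.
  case: (ltrgt0P (complex.Im w)) w0 => // hw _.
    by rewrite gtr0_sgz // add0n add1n -addn1 !PoszD; ring.
  by rewrite ltr0_sgz // add0n add1n -addn1 !PoszD; ring.
Qed.
End Prod.
Section Extract.
Variable R : rcfType.
Implicit Types (p q : {poly R}) (a b c : R).

Lemma path_lt_trans (y c : R) s : y < c -> path <%R c s -> path <%R y s.
Proof. by case: s => //= z s yc /andP[cz ->]; rewrite (lt_trans yc cz). Qed.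

Lemma roots_split p a c b : a < c -> c < b -> ~~ root p c ->
  roots p a b = roots p a c ++ roots p c b.
Proof.
move=> ac cb pc.
have [->|p0] := eqVneq p 0; first by rewrite !roots0.
have cab : c \in `]a, b[ by rewrite in_itv /= ac cb.
symmetry; apply: roots_uniq => //.
  by apply: (cat_roots_on cab pc); rewrite ?sorted_roots //; apply: roots_on_roots.
case E : (roots p a c) => [|x t] /=; first exact: sorted_roots.
have := path_roots p a c; rewrite E /= => /andP[_ pxt].
rewrite cat_path pxt /=; apply: (@path_lt_trans _ c); last exact: path_roots.
have := last_roots_le p ac; rewrite E /=.
by case: t {E pxt} => //=.
Qed.

Lemma cindex_split q p a c b : a < c -> c < b -> ~~ root p c ->
  cindex a b q p = cindex a c q p + cindex c b q p.
Proof. by move=> ac cb pc; rewrite /cindex (roots_split p a c b ac cb pc) big_cat. Qed.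

Lemma variation_le1 (x y : R) : variation x y <= 1.
Proof. by rewrite /variation; case: (x * y < 0); case: sgzP. Qed.

Lemma sorted_bounds (x0 : R) t y : sorted <=%R (x0 :: t) -> y \in x0 :: t ->
  x0 <= y <= last x0 t.
Proof.
elim: t x0 y => [|z t IH] x0 y /=.
  by move=> _; rewrite inE => /eqP->; rewrite lexx.
move=> /andP[xz st]; rewrite inE => /orP[/eqP->|yin].
  have /andP[h1 _] := IH z _ st (mem_last z t).
  by rewrite lexx (le_trans xz h1).
by have /andP[h1 ->] := IH z _ st yin; rewrite (le_trans xz h1).
Qed.

Lemma cindex_le1 q p a b : a < b -> q != 0 -> {in `]a, b[, forall x, ~~ root q x} ->
  cindex a b q p <= 1.
Proof.
move=> ab q0 nq.
have [->|p0] := eqVneq p 0; first by rewrite /cindex roots0 big_nil.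
case E : (roots p a b) => [|x0 t]; first by rewrite /cindex E big_nil.
set l := last x0 t.
have st : sorted <=%R (x0 :: t).
  by rewrite -E; apply: sub_sorted (sorted_roots a b p) => u v /ltW.
have xin y : y \in roots p a b -> x0 <= y <= l by rewrite E; apply: sorted_bounds.
have x0in : x0 \in `]a, b[ by apply: (@roots_in _ p); rewrite E mem_head.
have lin : l \in `]a, b[ by apply: (@roots_in _ p); rewrite E mem_last.
move: x0in lin; rewrite !in_itv /= => /andP[ax0 x0b] /andP[al lb].
have x0E : x0 \in roots p a b by rewrite E mem_head.
have /andP[_ x0l] := xin x0 x0E.
set a' := (a + x0) / 2; set b' := (l + b) / 2.
have aa' : a < a' by rewrite /a'; lra.
have a'x0 : a' < x0 by rewrite /a'; lra.
have lb' : l < b' by rewrite /b'; lra.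
have b'b : b' < b by rewrite /b'; lra.
have a'b' : a' < b' by lra.
have sub y : y \in `]a', b'[ -> y \in `]a, b[.
  by rewrite !in_itv /= => /andP[h1 h2]; apply/andP; split; lra.
have E' : roots p a' b' = x0 :: t.
  symmetry; apply: roots_uniq => //; last by rewrite -E sorted_roots.
  move=> y; apply/idP/idP.
    by case/andP=> yi ry; rewrite -E -root_is_roots // sub.
  move=> yin; have yin' : y \in roots p a b by rewrite E.
  have /andP[h1 h2] := xin y yin'.
  by rewrite (root_roots yin') andbT in_itv /=; apply/andP; split; lra.
have -> : cindex a b q p = cindex a' b' q p by rewrite /cindex E E'.
have nr y : y \in `]a, b[ -> y < x0 -> ~~ root (p * q) y.
  move=> yi yx; rewrite rootM negb_or nq // andbT (root_is_roots p0 yi).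
  by apply/negP => /xin /andP[h _]; move: (lt_le_trans yx h); rewrite ltxx.
have nr' y : y \in `]a, b[ -> l < y -> ~~ root (p * q) y.
  move=> yi yx; rewrite rootM negb_or nq // andbT (root_is_roots p0 yi).
  by apply/negP => /xin /andP[_ h]; move: (lt_le_trans yx h); rewrite ltxx.
have a'in : a' \in `]a, b[ by rewrite in_itv /=; apply/andP; split; lra.
have b'in : b' \in `]a, b[ by rewrite in_itv /=; apply/andP; split; lra.
have := cindex_inv a'b' (nr a' a'in a'x0) (nr' b' b'in lb').
have -> : cindex a' b' p q = 0.
  by rewrite /cindex no_root_roots ?big_nil // => y /sub /nq.
by rewrite addr0 => ->; apply: variation_le1.
Qed.
End Extract.
Section Extract2.
Variable R : rcfType.
Implicit Types (p q : {poly R}) (a b c : R).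

Lemma cindex_root q p a b : 0 < cindex a b q p ->
  exists x, (a < x) && (x < b) && root p x.
Proof.
case E : (roots p a b) => [|x t]; first by rewrite /cindex E big_nil ltxx.
move=> _; have xin : x \in roots p a b by rewrite E mem_head.
exists x; rewrite (root_roots xin) andbT.
by have := roots_in xin; rewrite in_itv.
Qed.

Lemma extract_itv q p : (forall x, root p x -> ~~ root q x) -> q != 0 ->
  forall n a b, (size (roots q a b) <= n)%N -> a < b ->
  forall K, (0 < K)%N -> K%:Z <= cindex a b q p ->
  exists mu nu : seq R, [/\ size mu = K, size nu = K.-1,
     all (fun x => (a < x) && (x < b) && root p x) mu, all (root q) nu
   & interlace_lt mu nu].
Proof.
move=> nc q0.
have nilcase a b K : roots q a b = [::] -> a < b -> (0 < K)%N -> K%:Z <= cindex a b q p ->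
  exists mu nu : seq R, [/\ size mu = K, size nu = K.-1,
     all (fun x => (a < x) && (x < b) && root p x) mu, all (root q) nu
   & interlace_lt mu nu].
  move=> E ab K0 hK.
  have le1 := @cindex_le1 _ q p a b ab q0 (roots_nil q0 E).
  have K1 : K = 1%N.
    apply/eqP; rewrite eqn_leq K0 andbT -lez_nat.
    exact: le_trans hK le1.
  subst K.
  have [x hx] := @cindex_root q p a b (lt_le_trans ltr01 hK).
  by exists [:: x], [::]; split=> //=; rewrite ?hx // => i.
elim=> [|n IH] a b sz ab K K0 hK.
  by apply: nilcase => //; apply/eqP; rewrite -size_eq0 -leqn0.
case Er : (roots q a b) => [|x0 t]; first by apply: nilcase.
move: Er; rewrite lastI; set s := belast x0 t; set r := last x0 t => Er.
have := roots_rcons q a b r s; rewrite Er eqxx => /esym /and5P [_ rin /eqP rb rr /eqP ra].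
move: rin; rewrite in_itv /= => /andP[ar rlb].
have pr := contraL (nc r) rr.
have hs := @cindex_split _ q p a r b ar rlb pr.
have hr1 := @cindex_le1 _ q p r b rlb q0 (roots_nil q0 rb).
have szs : (size (roots q a r) <= n)%N by rewrite ra -ltnS -(size_rcons s r) -Er.
case: (lerP (cindex r b q p) 0) => hle.
  have hK' : K%:Z <= cindex a r q p.
    by apply: (le_trans hK); rewrite hs gerDl.
  have [mu [nu [smu snu amu anu il]]] := IH a r szs ar K K0 hK'.
  exists mu, nu; split=> //; apply: sub_all amu => y /andP[/andP[ay yr] ->].
  by rewrite ay (lt_trans yr rlb).
have e1 : cindex r b q p = 1 by apply/eqP; rewrite eq_le hr1.
have [x /andP[/andP[rx xb] px]] := @cindex_root q p r b hle.
case: K K0 hK => // K' _ hK.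
case: K' hK => [|K] hK.
  exists [:: x], [::]; split=> //=; try by rewrite (lt_trans ar rx) xb px.
have hK' : (K.+1)%:Z <= cindex a r q p.
  by move: hK; rewrite hs e1 -addn1 PoszD lerD2r.
have [mu [nu [smu snu amu anu il]]] := IH a r szs ar K.+1 isT hK'.
exists (rcons mu x), (rcons nu r); split.
- by rewrite size_rcons smu.
- by rewrite size_rcons snu.
- rewrite all_rcons (lt_trans ar rx) xb px /=.
  apply: sub_all amu => y /andP[/andP[ay yr] ->].
  by rewrite ay (lt_trans yr rlb).
- by rewrite all_rcons rr anu.
move=> i; rewrite size_rcons snu /= ltnS => hi.
rewrite !nth_rcons smu snu /= ltnS hi.
case: (ltnP i K) => hiK.
  by rewrite ltnS hiK; apply: il; rewrite snu.
have eiK : i = K by apply/eqP; rewrite eqn_leq hi hiK.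
subst i; rewrite ltnn eqxx; split; last by rewrite eqxx.
have : nth 0 mu K \in mu by apply: mem_nth; rewrite smu.
by move/(allP amu) => /andP[/andP[]].
Qed.
End Extract2.
Section ExtractR.
Variable R : rcfType.
Implicit Types (p q : {poly R}).

Lemma extractR_pos q p : p != 0 -> q != 0 -> (forall x, root p x -> ~~ root q x) ->
  forall K, (0 < K)%N -> cindexR q p = K%:Z ->
  exists mu nu : seq R, [/\ size mu = K, size nu = K.-1,
     all (root p) mu, all (root q) nu & interlace_lt mu nu].
Proof.
move=> p0 q0 nc K K0 hK.
have pq0 : p * q != 0 by rewrite mulf_neq0.
set B := cauchy_bound (p * q).
have hB : - B < B by rewrite gtrN // cauchy_bound_gt0.
have e : cindex (- B) B q p = cindexR q p.
  apply: cindexRP => x hx.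
    by have := le_cauchy_bound pq0 hx; rewrite rootM negb_or => /andP[].
  by have := ge_cauchy_bound pq0 hx; rewrite rootM negb_or => /andP[].
have [mu [nu [smu snu amu anu il]]] :=
  @extract_itv _ q p nc q0 _ (- B) B (leqnn _) hB K K0 ltac:(by rewrite e hK).
exists mu, nu; split=> //; apply: sub_all amu => x /andP[_ ->] //.
Qed.

Lemma extractR q p : p != 0 -> (forall x, root p x -> ~~ root q x) ->
  exists mu nu : seq R, [/\ size mu = `|cindexR q p|%N,
     size nu = (`|cindexR q p|%N).-1,
     all (root p) mu, all (root q) nu & interlace_lt mu nu].
Proof.
move=> p0 nc.
have [->|q0] := eqVneq q 0; first by exists [::], [::]; rewrite cindexR0p.
have [hI|hI|hI] := ltrgt0P (cindexR q p); last first.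
- by exists [::], [::]; rewrite hI.
- have nc' : forall x, root p x -> ~~ root (- q) x by move=> x; rewrite rootN; apply: nc.
  have := @extractR_pos (- q) p p0 ltac:(by rewrite oppr_eq0) nc' `|cindexR q p|%N.
  rewrite absz_gt0 lt_eqF // cindexR_opp (ltz0_abs hI) => /(_ isT erefl).
  move=> [mu [nu [? ? ? anu ?]]]; exists mu, nu; split=> //.
  by apply: sub_all anu => x; rewrite rootN.
- apply: (@extractR_pos q p p0 q0 nc `|cindexR q p|%N).
    by rewrite absz_gt0 gt_eqF.
  by rewrite (gez0_abs (ltW hI)).
Qed.

Lemma interlace_lt_sorted (mu nu : seq R) : (size mu <= (size nu).+1)%N ->
  interlace_lt mu nu -> sorted <%R mu /\ sorted <%R nu.
Proof.
move=> smu il; split; apply/(sortedP 0) => i hi.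
  have hi' : (i < size nu)%N by rewrite -ltnS (leq_trans hi smu).
  by have [h1 h2] := il i hi'; apply: lt_trans h1 h2.
have [_ h1] := il i (ltnW hi).
by have [h2 _] := il i.+1 hi; apply: lt_trans h1 h2.
Qed.

Lemma prod_dvd p (s : seq R) : all (root p) s -> uniq s ->
  \prod_(x <- s) ('X - x%:P) %| p.
Proof.
move=> rs us; have [r ->] := uniq_roots_prod_XsubC rs ltac:(by rewrite uniq_rootsE).
exact: dvdp_mull.
Qed.
End ExtractR.
Lemma sum_even_odd (V : nmodType) m (f : nat -> V) :
  \sum_(k < m) f k = \sum_(j < uphalf m) f j.*2 + \sum_(j < m./2) f j.*2.+1.
Proof.
elim: m => [|m IH]; first by rewrite !big_ord0 addr0.
rewrite big_ord_recr /= IH.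
have hm := odd_double_half m.
have hu := uphalf_half m.
case: (odd m) hm hu => /= hm hu; rewrite hu ?add1n ?add0n.
  rewrite -addrA; congr (_ + _); rewrite big_ord_recr /=; congr (_ + _).
  by rewrite -{1}hm add1n.
rewrite -addrA [_ + f m]addrC addrA; congr (_ + _); rewrite big_ord_recr /=; congr (_ + _).
by rewrite -{1}hm add0n.
Qed.
Section Coef.
Variable R : rcfType.
Local Notation toC := (map_poly (real_complex R)).
Local Notation Ii := (Complex (0:R) 1).

Lemma Ii_sq : Ii * Ii = -1 :> R[i].
Proof. by apply/eqP; rewrite eq_complex /= !mul0r !mulr0 !mul1r sub0r add0r oppr0 !eqxx. Qed.

Lemma Ii_neq0 : Ii != 0 :> R[i].
Proof. by rewrite eq_complex /= oner_eq0 andbF. Qed.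

Lemma comp_prod (rs : seq R[i]) :
  (\prod_(z <- rs) ('X - z%:P)) \Po (Ii *: 'X) =
  Ii ^+ size rs *: \prod_(z <- rs) ('X - (- (Ii * z))%:P).
Proof.
elim: rs => [|z rs IH]; first by rewrite !big_nil comp_polyC expr0 scale1r.
rewrite !big_cons comp_polyM IH comp_polyB comp_polyX comp_polyC /=.
have e : Ii *: 'X - z%:P = Ii *: ('X - (- (Ii * z))%:P).
  rewrite scalerBr; congr (_ - _).
  by rewrite -mul_polyC -polyCM mulrN mulrA Ii_sq mulN1r opprK.
by rewrite e -scalerAl -scalerAr scalerA exprS.
Qed.

Lemma comp_fpoly n (a : nat -> R) :
  toC (fpoly n a) \Po (Ii *: 'X) =
  \sum_(k < n.+1) ((a k)%:C%C * Ii ^+ (n - k)) *: 'X^(n - k).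
Proof.
rewrite /fpoly rmorph_sum /= linear_sum /=; apply: eq_bigr => k _.
by rewrite map_polyZ map_polyXn /= comp_polyZ comp_Xn_poly exprZn scalerA.
Qed.

End Coef.
Section Coef2.
Variable R : rcfType.
Local Notation toC := (map_poly (real_complex R)).
Local Notation Ii := (Complex (0:R) 1).

Lemma toC_sum_scaleXn (m : nat) (c : 'I_m -> R) (e : 'I_m -> nat) :
  toC (\sum_(j < m) c j *: 'X^(e j)) = \sum_(j < m) (c j)%:C%C *: 'X^(e j).
Proof.
by rewrite rmorph_sum; apply: eq_bigr => j _ /=; rewrite map_polyZ map_polyXn.
Qed.

Lemma sgn_sq j : (-1) ^+ j * (-1) ^+ j = 1 :> R[i].
Proof. by rewrite -exprMn mulrNN mulr1 expr1n. Qed.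

Lemma Ii_double k : Ii ^+ k.*2 = (-1) ^+ k :> R[i].
Proof. by rewrite -muln2 mulnC exprM expr2 Ii_sq. Qed.

Lemma even_scal n j (A : R) : (j.*2 <= n)%N ->
  Ii ^+ n * ((-1) ^+ j * A)%:C%C = A%:C%C * Ii ^+ (n - j.*2).
Proof.
move=> hj; rewrite -{1}(subnK hj) exprD Ii_double.
rewrite rmorphM rmorphXn rmorphN1 /= mulrA -(mulrA _ _ ((-1) ^+ j)) sgn_sq mulr1.
by rewrite mulrC.
Qed.

Lemma odd_scal n j (A : R) : (j.*2.+1 <= n)%N ->
  - (Ii ^+ n * Ii * ((-1) ^+ j * A)%:C%C) = A%:C%C * Ii ^+ (n - j.*2.+1).
Proof.
move=> hj; rewrite -exprSr -{1}(subnK hj) -addnS exprD -doubleS Ii_double.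
rewrite rmorphM rmorphXn rmorphN1 /= exprS mulN1r mulrN mulNr opprK.
by rewrite -mulrA (mulrA ((-1) ^+ j)) sgn_sq mul1r mulrC.
Qed.

Lemma PQ_ident n (a : nat -> R) :
  Ii ^+ n *: (toC (Ppoly n a) - Ii%:P * toC (Qpoly n a)) =
  \sum_(k < n.+1) ((a k)%:C%C * Ii ^+ (n - k)) *: 'X^(n - k).
Proof.
rewrite (@sum_even_odd _ n.+1 (fun k => ((a k)%:C%C * Ii ^+ (n - k)) *: 'X^(n - k))).
rewrite /Ppoly /Qpoly !toC_sum_scaleXn scalerBr mulr_sumr !scaler_sumr -sumrN.
congr (_ + _); apply: eq_bigr => j _.
  rewrite scalerA even_scal //.
  have hj : (j <= n./2)%N by rewrite -ltnS.
  by rewrite -(leq_double) in hj; apply: (leq_trans hj); rewrite -{2}(odd_double_half n) leq_addl.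
rewrite mul_polyC !scalerA -scaleNr odd_scal //.
have h2 : ((j.+1).*2 <= n.+1)%N.
  apply: (@leq_trans (n.+1./2).*2); first by rewrite leq_double.
  by rewrite -{2}(odd_double_half n.+1) leq_addl.
by rewrite doubleS ltnS in h2.
Qed.
End Coef2.
Section Coef3.
Variable R : rcfType.
Local Notation toC := (map_poly (real_complex R)).
Local Notation Ii := (Complex (0:R) 1).

Lemma coef_fpoly n (a : nat -> R) k :
  (fpoly n a)`_k = \sum_(i < n.+1) a i * (k == (n - i)%N)%:R.
Proof. by rewrite /fpoly coef_sum; apply: eq_bigr => i _; rewrite coefZ coefXn. Qed.

Lemma size_fpoly n (a : nat -> R) : a 0%N = 1 -> size (fpoly n a) = n.+1.
Proof.
move=> a0; apply/eqP; rewrite eqn_leq; apply/andP; split.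
  apply/leq_sizeP => j hj; rewrite coef_fpoly big1 // => i _.
  have : (n - i < j)%N by apply: leq_ltn_trans (leq_subr _ _) hj.
  by rewrite ltn_neqAle eq_sym => /andP[/negPf -> _]; rewrite mulr0.
have cn : (fpoly n a)`_n = 1.
  rewrite coef_fpoly big_ord_recl /= subn0 eqxx a0 mulr1 big1 ?addr0 // => i _.
  have : (n - (bump 0 i) < n)%N.
    by rewrite /bump /= add1n subnS prednK ?subn_gt0 // ?leq_subr // ltn_ord.
  by rewrite ltn_neqAle eq_sym => /andP[/negPf -> _]; rewrite mulr0.
rewrite ltnNge; apply/negP => hs; move: cn; rewrite nth_default //.
by move/eqP; rewrite eq_sym oner_eq0.
Qed.

Lemma factor_h n (a : nat -> R) (rs : seq R[i]) : a 0%N = 1 ->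
  toC (fpoly n a) = \prod_(z <- rs) ('X - z%:P) ->
  size rs = n /\
  toC (Ppoly n a) - Ii%:P * toC (Qpoly n a) = \prod_(z <- rs) ('X - (- (Ii * z))%:P).
Proof.
move=> a0 hf.
have srs : size rs = n.
  have := congr1 (fun p : {poly R[i]} => size p) hf.
  by rewrite /= size_map_poly size_fpoly // size_prod_XsubC; case.
split=> //.
apply: (@scalerI _ _ (Ii ^+ n)); first by rewrite expf_neq0 // Ii_neq0.
by rewrite PQ_ident -comp_fpoly hf comp_prod srs.
Qed.
End Coef3.
Section Interlace.
Variable R : rcfType.
Implicit Types (s mu nu ts : seq R).
Local Notation cnt s x := (count (fun y => y <= x) s).

Lemma sorted_nth_le s i x : sorted <=%R s -> (i < size s)%N ->
  (nth 0 s i <= x) = (i < cnt s x)%N.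
Proof.
elim: s i => [|y s IH] i //= st.
have mn := order_path_min le_trans st.
have st' := path_sorted st.
have c0 : ~~ (y <= x) -> cnt s x = 0%N.
  move=> yx; apply/eqP; rewrite -leqn0 leqNgt -has_count; apply/hasPn => z zs.
  by apply: contra yx => zx; apply: le_trans zx; apply: (allP mn).
case: i => [|j] /= hj.
  by case: (boolP (y <= x)) => yx //; rewrite c0.
rewrite ltnS in hj.
case: (boolP (y <= x)) => yx; first by rewrite add1n ltnS IH.
rewrite c0 // add0n ltn0; apply/negP => hx; move/negP: yx; apply.
by apply: le_trans hx; apply: (allP mn); apply: mem_nth.
Qed.

Lemma interlace_cnt mu nu : sorted <=%R mu -> sorted <=%R nu ->
  size mu = (size nu).+1 ->
  interlace_le mu nu <->
  (forall x, (cnt nu x <= cnt mu x)%N /\ (cnt mu x <= (cnt nu x).+1)%N).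
Proof.
move=> smu snu sz; split.
  move=> il x; split.
    case E : (cnt nu x) => [//|c].
    have cs : (c < size nu)%N by rewrite -E -ltnS ltnS count_size.
    have : (nth 0 nu c <= x) by rewrite sorted_nth_le // E.
    have [h1 _] := il c cs.
    move=> h2; have : (nth 0 mu c <= x) by apply: le_trans h1 h2.
    by rewrite sorted_nth_le // sz ltnS ltnW.
  case E : (cnt mu x) => [//|c]; case: c E => [//|c] E.
  have cs : (c.+1 < size mu)%N by rewrite -E count_size.
  have cs' : (c < size nu)%N by rewrite -ltnS -sz.
  have : (nth 0 mu c.+1 <= x) by rewrite sorted_nth_le // E.
  have [_ h1] := il c cs'.
  move=> h2; have : (nth 0 nu c <= x) by apply: le_trans h1 h2.
  by rewrite sorted_nth_le // ltnS.
move=> hc i hi.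
have hi' : (i < size mu)%N by rewrite sz ltnS ltnW.
have hi'' : (i.+1 < size mu)%N by rewrite sz ltnS.
split.
  have [h1 _] := hc (nth 0 nu i).
  have : (i < cnt nu (nu`_i)%R)%N by rewrite -sorted_nth_le.
  by move=> h; rewrite sorted_nth_le //; apply: leq_trans h h1.
rewrite leNgt; apply/negP => hlt.
have [_ h1] := hc (nth 0 mu i.+1).
have : (i.+1 < cnt mu (mu`_i.+1)%R)%N by rewrite -sorted_nth_le.
have : ~~ (i < cnt nu (mu`_i.+1)%R)%N.
  by rewrite -sorted_nth_le // -ltNge.
rewrite -leqNgt => h2 h3.
by have := leq_trans h3 h1; rewrite ltnS leqNgt ltnS h2.
Qed.

Lemma interlace_insert mu nu ts : sorted <=%R mu -> sorted <=%R nu ->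
  size mu = (size nu).+1 -> interlace_le mu nu ->
  interlace_le (sort <=%R (mu ++ ts)) (sort <=%R (nu ++ ts)).
Proof.
move=> smu snu sz il.
have [il1 _] := @interlace_cnt mu nu smu snu sz.
have hc := il1 il.
have ss1 := sort_le_sorted (mu ++ ts); have ss2 := sort_le_sorted (nu ++ ts).
have sz' : size (sort <=%R (mu ++ ts)) = (size (sort <=%R (nu ++ ts))).+1.
  by rewrite !size_sort !size_cat sz.
apply/(@interlace_cnt _ _ ss1 ss2 sz').
move=> x; rewrite !(permP (permEl (perm_sort _ _))) !count_cat.
have [h1 h2] := hc x; rewrite leq_add2r h1 /= -addSn leq_add2r //.
Qed.

Lemma interlace_behead s : sorted <=%R s -> interlace_le s (behead s).
Proof.
move=> ss i; rewrite size_behead => hi; rewrite nth_behead; split=> //.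
by move/(sortedP 0): ss => /(_ i); apply; rewrite -subn1 ltn_subRL add1n in hi *.
Qed.

End Interlace.
Section Final.
Variable R : rcfType.
Local Notation toC := (map_poly (real_complex R)).
Local Notation Ii := (Complex (0:R) 1).

Lemma toC_split_inj (A B A' B' : {poly R}) :
  toC A - Ii%:P * toC B = toC A' - Ii%:P * toC B' -> A = A' /\ B = B'.
Proof.
move=> H.
have hk k : (A`_k = A'`_k) /\ (B`_k = B'`_k).
  have := congr1 (fun p : {poly R[i]} => p`_k) H.
  rewrite /= !coefB !coefCM !coef_map /= => /eqP.
  rewrite eq_complex /= !mul0r !mul1r ?mulr0 ?subr0 ?add0r ?sub0r ?eqr_opp.
  by move=> /andP[/eqP -> /eqP ->].
by split; apply/polyP => k; have [] := hk k.
Qed.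
End Final.
Lemma count3 (R : rcfType) (rs : seq R[i]) :
  size rs = (count (fun z : R[i] => (0 < complex.Re z)%R) rs
           + count (fun z : R[i] => (complex.Re z < 0)%R) rs
           + count (fun z : R[i] => (complex.Re z == 0)%R) rs)%N.
Proof.
elim: rs => [//|z s IH] /=; rewrite IH.
by case: (ltrgt0P (complex.Re z)) => h /=; lia.
Qed.

Lemma dist_eq (p q z : nat) :
  (p + q + z - (minn p q).*2)%N = (`|(q%:Z - p%:Z)%R|%N + z)%N.
Proof.
case: (leqP p q) => h.
  by rewrite distnEl //; lia.
by rewrite distnEr ?(ltnW h) //; lia.
Qed.
Theorem corollary3p3 (R : rcfType) (n : nat) (a : nat -> R)
  (rs : seq R[i]) :
  a 0%N = 1 ->
  (* rs is the list of complex roots of f, counted with multiplicity *)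
  map_poly (real_complex R) (fpoly n a) = \prod_(z <- rs) ('X - z%:P) ->
  let npos := count (fun z : R[i] => 0 < complex.Re z) rs in
  let nneg := count (fun z : R[i] => complex.Re z < 0) rs in
  let nzero := count (fun z : R[i] => complex.Re z == 0) rs in
  (nzero < n)%N ->
  let d := (n - (minn npos nneg).*2)%N in
  (exists (mu nu : seq R),
      [/\ size mu = d, size nu = d.-1,
          \prod_(m <- mu) ('X - m%:P) %| Ppoly n a,
          \prod_(m <- nu) ('X - m%:P) %| Qpoly n a
        & interlace_le mu nu]) /\
  (nzero = 0%N ->
    exists (mu nu : seq R),
      [/\ size mu = d, size nu = d.-1,
          \prod_(m <- mu) ('X - m%:P) %| Ppoly n a,
          \prod_(m <- nu) ('X - m%:P) %| Qpoly n a
        & interlace_lt mu nu]).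
Proof.
move=> a0 hf npos nneg nzero _ d.
have [srs hh] := @factor_h R n a rs a0 hf.
pose Ii := Complex (0:R) 1.
pose w := fun z : R[i] => - (Ii * z).
pose p0 := fun z : R[i] => complex.Re z == 0.
pose rs0 := filter p0 rs.
pose rs1 := filter (predC p0) rs.
have hperm : perm_eq (rs0 ++ rs1) rs by rewrite perm_filterC.
pose ts := map (fun z : R[i] => complex.Im z) rs0.
pose rr := \prod_(t <- ts) ('X - t%:P).
have e0 : \prod_(z <- rs0) ('X - (w z)%:P) = map_poly (real_complex R) rr.
  rewrite /rr big_map rmorph_prod; apply: eq_big_seq => z.
  rewrite mem_filter => /andP[/eqP hz _].
  rewrite rmorphB /= map_polyX map_polyC /=; congr ('X - _%:P).
  move: hz; case: z => x y /= ->; apply/eqP.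
  by rewrite eq_complex /= !mul0r !mul1r ?mulr0 ?sub0r ?opprK ?addr0 ?add0r ?oppr0 !eqxx.
have all1 : all (fun x => complex.Im x != 0) (map w rs1).
  apply/allP => u /mapP[z]; rewrite mem_filter => /andP[hz _] ->.
  by move: hz; case: z => x y /=; rewrite !mul0r mul1r add0r oppr_eq0.
have [P1 [Q1 [eh1 P1m sQ1 hi1]]] := @index_prod R _ all1.
have eh1m := eh1; rewrite big_map in eh1.
have [hP hQ] : Ppoly n a = rr * P1 /\ Qpoly n a = rr * Q1.
  apply: toC_split_inj; rewrite hh -(perm_big _ hperm) big_cat /= e0 -eh1.
  by rewrite !rmorphM /=; ring.
have nc : forall x, root P1 x -> ~~ root Q1 x.
  move=> x r1; apply/negP => r2.
  have : root (\prod_(u <- map w rs1) ('X - u%:P)) (real_complex R x).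
    rewrite -eh1m rootE !hornerE !horner_map /=.
    by move: r1 r2; rewrite !rootE => /eqP -> /eqP ->; rewrite mulr0 subr0.
  rewrite root_prod_XsubC => /mapP[z]; rewrite mem_filter => /andP[hz _].
  move: hz; case: z => u v /= hu /eqP; rewrite eq_complex /= => /andP[_ /eqP].
  rewrite !mul0r mul1r add0r => /eqP; rewrite eq_sym oppr_eq0.
  by move/eqP=> e; move: hu; rewrite /p0 /= e eqxx.
have P10 : P1 != 0 by apply: monic_neq0.
have [mu1 [nu1 [smu1 snu1 amu1 anu1 il1]]] := @extractR R Q1 P1 P10 nc.
set K := `|cindexR Q1 P1|%N in smu1 snu1.
have c1 : count (fun x => 0 < complex.Im x) (map w rs1) = nneg.
  rewrite count_map count_filter; apply: eq_count => z /=.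
  case: z => u v /=; rewrite /p0 /= !mul0r mul1r add0r oppr_gt0.
  by case: ltrgt0P.
have c2 : count (fun x => complex.Im x < 0) (map w rs1) = npos.
  rewrite count_map count_filter; apply: eq_count => z /=.
  case: z => u v /=; rewrite /p0 /= !mul0r mul1r add0r oppr_lt0.
  by case: ltrgt0P.
have hKd : d = (K + nzero)%N.
  have hn : n = (npos + nneg + nzero)%N by rewrite -srs count3.
  by rewrite /d hn dist_eq /K hi1 c1 c2.
have szrs0 : size rs0 = nzero by rewrite size_filter.
have ssz : (size mu1 <= (size nu1).+1)%N by rewrite smu1 snu1 leqSpred.
have [smu snu] := @interlace_lt_sorted R mu1 nu1 ssz il1.
have dmu1 := @prod_dvd R P1 mu1 amu1 (lt_sorted_uniq smu).
have dnu1 := @prod_dvd R Q1 nu1 anu1 (lt_sorted_uniq snu).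
have ilw : interlace_le mu1 nu1.
  by move=> i hi; have [h1 h2] := il1 i hi; split; apply: ltW.
have psort (s : seq R) : \prod_(m <- sort <=%R s) ('X - m%:P) = \prod_(m <- s) ('X - m%:P).
  by apply: perm_big; apply: permEl; apply: perm_sort.
split.
  case: (posnP K) => K0.
    exists (sort <=%R ts), (behead (sort <=%R ts)); split.
    - by rewrite size_sort size_map szrs0 hKd K0.
    - by rewrite size_behead size_sort size_map szrs0 hKd K0.
    - by rewrite hP psort dvdp_mulIl.
    - rewrite hQ; apply: (dvdp_trans _ (dvdp_mulIl rr Q1)); rewrite /rr -(psort ts).
      by case: (sort _ _) => [|x t] /=; rewrite ?big_nil ?dvd1p // big_cons dvdp_mulIr.
    - exact: interlace_behead (sort_le_sorted ts).
  exists (sort <=%R (mu1 ++ ts)), (sort <=%R (nu1 ++ ts)); split.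
  - by rewrite size_sort size_cat smu1 size_map szrs0 hKd.
  - by rewrite size_sort size_cat snu1 size_map szrs0 hKd -subn1 -[in RHS]subn1 addnBAC.
  - by rewrite hP psort big_cat /= mulrC dvdp_mul.
  - by rewrite hQ psort big_cat /= mulrC dvdp_mul.
  apply: interlace_insert.
  - by apply: sub_sorted smu => u v /ltW.
  - by apply: sub_sorted snu => u v /ltW.
  - by rewrite smu1 snu1 prednK.
  - exact: ilw.
move=> hz0.
have rs00 : rs0 = [::] by apply/eqP; rewrite -size_eq0 szrs0 hz0.
have rr1 : rr = 1 by rewrite /rr /ts rs00 big_nil.
exists mu1, nu1; split.
- by rewrite smu1 hKd hz0 addn0.
- by rewrite snu1 hKd hz0 addn0.
- by rewrite hP rr1 mul1r.
- by rewrite hQ rr1 mul1r.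
- exact: il1.
Qed.
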